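(* Let $G$ be a graph of order $n$, and let $H$ be a graph with $\Delta(H)\le n(H)-2$, where $n(H)=|V(H)|$. Then $$\gamma_{oidR}(G\odot H)=\min\{|V_0|(n(H)+\gamma(H))+|V_1|(\gamma_{oidR}(H)+1)+|V_2|(\gamma_{oiR}(H)+2)+|V_3|(\beta(H)+3)\},$$ where the minimum is taken over all functions $f_G:V(G)\to\{0,1,2,3\}$ for which $V_0=f_G^{-1}(0)$ is an independent set of $G$, and $V_i=f_G^{-1}(i)$.
   Context: The corona $G\odot H$ is obtained from $G$ with $V(G)=\{v_1,\dots,v_n\}$ and $n$ disjoint copies $H_1,\dots,H_n$ of $H$ by joining $v_i$ to every vertex of $H_i$ for each $i$. $\gamma(H)$ is the domination number and $\beta(H)$ the vertex cover number of $H$. A DRD function of a graph is $f:V\to\{0,1,2,3\}$ such that every vertex with value $0$ has a neighbor with value $3$ or two neighbors with value $2$, and every vertex with value $1$ has a neighbor with value at least $2$; it is an OIDRD function if the set of vertices with value $0$ is independent, and $\gamma_{oidR}$ is the minimum weight $\sum_v f(v)$ of an OIDRD function. A Roman dominating function is $f:V\to\{0,1,2\}$ such that every vertex with value $0$ has a neighbor with value $2$; it is an OIRD function if the set of vertices with value $0$ is independent, and $\gamma_{oiR}$ is the minimum weight of an OIRD function. *)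

(* Defs.v *)
From mathcomp Require Import all_boot.
Set Implicit Arguments. Unset Strict Implicit. Unset Printing Implicit Defensive.

Section Graphs.
Variables (T : finType) (e : rel T).

Definition simple_graph : Prop := symmetric e /\ irreflexive e.

Definition nbhd (v : T) : {set T} := [set u | e v u].
Definition max_degree : nat := \max_(v : T) #|nbhd v|.

Definition independent (S : {set T}) : bool :=
  [forall u, forall v, ((u \in S) && (v \in S)) ==> ~~ e u v].

Definition dominating (S : {set T}) : bool :=
  [forall v, (v \in S) || [exists u, e v u && (u \in S)]].

Definition vertex_cover (S : {set T}) : bool :=
  [forall u, forall v, e u v ==> ((u \in S) || (v \in S))].

(* domination number and vertex cover number (setT is always feasible) *)
Definition gamma : nat := \big[minn/#|T|]_(S : {set T} | dominating S) #|S|.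
Definition beta : nat := \big[minn/#|T|]_(S : {set T} | vertex_cover S) #|S|.

Definition isDRD (f : {ffun T -> 'I_4}) : bool :=
  [forall v,
    ((f v == 0 :> nat) ==>
       ([exists u, e v u && (f u == 3 :> nat)]
        || (2 <= #|[set u | e v u && (f u == 2 :> nat)]|)))
    && ((f v == 1 :> nat) ==> [exists u, e v u && (2 <= f u)])].

Definition isOIDRD (f : {ffun T -> 'I_4}) : bool :=
  isDRD f && independent [set v | f v == 0 :> nat].

Definition weight4 (f : {ffun T -> 'I_4}) : nat := \sum_(v : T) (f v : nat).

(* the constant-3 function is always an OIDRD function, of weight 3|T| *)
Definition gamma_oidR : nat :=
  \big[minn/3 * #|T|]_(f : {ffun T -> 'I_4} | isOIDRD f) weight4 f.

Definition isRD (f : {ffun T -> 'I_3}) : bool :=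
  [forall v, (f v == 0 :> nat) ==> [exists u, e v u && (f u == 2 :> nat)]].

Definition isOIRD (f : {ffun T -> 'I_3}) : bool :=
  isRD f && independent [set v | f v == 0 :> nat].

Definition weight3 (f : {ffun T -> 'I_3}) : nat := \sum_(v : T) (f v : nat).

(* the constant-2 function is always an OIRD function, of weight 2|T| *)
Definition gamma_oiR : nat :=
  \big[minn/2 * #|T|]_(f : {ffun T -> 'I_3} | isOIRD f) weight3 f.

End Graphs.

(* Corona G ⊙ H: vertices inl v (v in G) and inr (v, h) (h in the copy H_v). *)
Definition corona_vert (TG TH : finType) : finType := (TG + (TG * TH))%type.

Definition corona (TG TH : finType) (eG : rel TG) (eH : rel TH) :
  rel (corona_vert TG TH) :=
  fun x y =>
    match x, y with
    | inl u, inl v => eG u v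
    | inl u, inr (i, _) => u == i
    | inr (i, _), inl u => u == i
    | inr (i, h), inr (j, k) => (i == j) && eH h k
    end.

Definition corona_cost (TG TH : finType) (eH : rel TH) (fG : {ffun TG -> 'I_4}) : nat :=
  #|[set v | fG v == 0 :> nat]| * (#|TH| + gamma eH)
  + #|[set v | fG v == 1 :> nat]| * (gamma_oidR eH + 1)
  + #|[set v | fG v == 2 :> nat]| * (gamma_oiR eH + 2)
  + #|[set v | fG v == 3 :> nat]| * (beta eH + 3).

(* Main.v *)
Require Import Defs.
From mathcomp Require Import all_boot.
From mathcomp Require Import zify.
Set Implicit Arguments. Unset Strict Implicit. Unset Printing Implicit Defensive.

Lemma bigmin_le (I : finType) (P : pred I) (F : I -> nat) d x :
  P x -> \big[minn/d]_(i | P i) F i <= F x.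
Proof.
move=> Px; rewrite unlock /reducebig.
have : x \in index_enum I by rewrite mem_index_enum.
elim: (index_enum I) => //= a r IH; rewrite inE => /orP [/eqP <-|xr].
  by rewrite Px geq_minl.
case: (P a); last exact: IH.
by rewrite (leq_trans (geq_minr _ _)) // IH.
Qed.

Lemma bigmin_attained (I : finType) (P : pred I) (F : I -> nat) d x0 :
  P x0 -> F x0 <= d -> exists2 x, P x & \big[minn/d]_(i | P i) F i = F x.
Proof.
move=> Px0 Fx0.
have : \big[minn/d]_(i | P i) F i = d \/ exists2 x, P x & \big[minn/d]_(i | P i) F i = F x.
  apply: (big_ind (fun m => m = d \/ exists2 x, P x & m = F x)); first by left.
    move=> a b Ha Hb; rewrite /minn; case: ltnP => _; [exact: Ha|exact: Hb].
  by move=> i Pi; right; exists i.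
case=> [Hd|]; last by [].
exists x0 => //; apply/eqP; rewrite eqn_leq (bigmin_le _ _ Px0) Hd Fx0.
done.
Qed.

Section G.
Variables (T : finType) (e : rel T).

Lemma indepP (S : {set T}) : reflect (forall u v, u \in S -> v \in S -> ~~ e u v) (independent e S).
Proof.
apply: (iffP forallP) => [H u v uS vS|H u].
  by move: (H u) => /forallP /(_ v) /implyP; apply; rewrite uS vS.
by apply/forallP => v; apply/implyP => /andP [] /H; apply.
Qed.

Lemma domP (S : {set T}) : reflect (forall v, v \in S \/ exists2 u, e v u & u \in S) (dominating e S).
Proof.
apply: (iffP forallP) => [H v|H v].
  by case/orP: (H v) => [->|/existsP [u /andP [] ? ?]]; [left|right; exists u].
by case: (H v) => [->//|[u ? ?]]; apply/orP; right; apply/existsP; exists u; apply/andP.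
Qed.

Lemma vcP (S : {set T}) : reflect (forall u v, e u v -> u \in S \/ v \in S) (vertex_cover e S).
Proof.
apply: (iffP forallP) => [H u v euv|H u].
  by move: (H u) => /forallP /(_ v) /implyP /(_ euv) /orP.
apply/forallP => v; apply/implyP => /H [] ->; rewrite ?orbT //.
Qed.

Definition DRDprop (f : {ffun T -> 'I_4}) :=
  forall v, ((f v == 0 :> nat) -> 
       ((exists2 u, e v u & (f u == 3 :> nat))
        \/ (2 <= #|[set u | e v u && (f u == 2 :> nat)]|)))
    /\ ((f v == 1 :> nat) -> exists2 u, e v u & (2 <= f u)).

Lemma DRDP f : reflect (DRDprop f) (isDRD e f).
Proof.
apply: (iffP forallP) => [H v|H v].
  case/andP: (H v) => /implyP H1 /implyP H2; split.
    move=> /H1 /orP [/existsP [u /andP [] ? ?]|->]; [left; exists u|right] => //.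
  by move=> /H2 /existsP [u /andP [] ? ?]; exists u.
case: (H v) => H1 H2; apply/andP; split; apply/implyP.
  move=> /H1 [[u ? ?]|->]; rewrite ?orbT //; apply/orP; left; apply/existsP; exists u; exact/andP.
by move=> /H2 [u ? ?]; apply/existsP; exists u; apply/andP.
Qed.

Lemma RDP (f : {ffun T -> 'I_3}) : reflect (forall v, (f v == 0 :> nat) -> exists2 u, e v u & (f u == 2 :> nat)) (isRD e f).
Proof.
apply: (iffP forallP) => [H v /(implyP (H v)) /existsP [u /andP [] ? ?]|H v]; first by exists u.
by apply/implyP => /H [u ? ?]; apply/existsP; exists u; apply/andP.
Qed.

Lemma sum_ind (P : pred T) c : \sum_(v : T) (P v : nat) * c = #|[set v | P v]| * c.
Proof.
rewrite -big_distrl /= cardsE -sum1_card [in RHS]big_mkcond /=.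
by congr (_ * _); apply: eq_bigr => v _; rewrite unfold_in; case: (P v).
Qed.

Lemma sum_mem (S : {set T}) : \sum_(v : T) (v \in S : nat) = #|S|.
Proof.
have := sum_ind (fun v => v \in S) 1.
rewrite muln1 (_ : [set v | v \in S] = S); last by apply/setP => v; rewrite inE.
by move=> <-; apply: eq_bigr => v _; rewrite muln1.
Qed.

End G.
Section Main.
Variables (TG TH : finType) (eG : rel TG) (eH : rel TH).
Local Notation C := (corona eG eH).

Lemma weight_corona (f : {ffun corona_vert TG TH -> 'I_4}) :
  weight4 f = \sum_(v : TG) (f (inl v) + \sum_(h : TH) f (inr (v, h))).
Proof.
rewrite /weight4 big_sumType /= big_split /=; congr (_ + _).
by rewrite pair_big /=; apply: eq_bigr => -[].
Qed.

Definition L (k : nat) := match k with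
  | 0 => #|TH| + gamma eH | 1 => gamma_oidR eH | 2 => gamma_oiR eH | _ => beta eH end.

Lemma cost_eq (fG : {ffun TG -> 'I_4}) :
  corona_cost eH fG = \sum_v (fG v + L (fG v)).
Proof.
rewrite /corona_cost -!sum_ind -!big_split /=.
apply: eq_bigr => v _; case: (fG v) => [[|[|[|[|k]]]] Hk] //=; lia.
Qed.

Lemma sum1 : \sum_(h : TH) 1 = #|TH|.
Proof. by rewrite sum1_card. Qed.


Lemma lower (f : {ffun corona_vert TG TH -> 'I_4}) (v : TG) :
  isOIDRD C f -> L (f (inl v)) <= \sum_(h : TH) f (inr (v, h)).
Proof.
case/andP => /DRDP Hd /indepP Hi.
have Hi' : forall x y, f x == 0 :> nat -> f y == 0 :> nat -> ~~ C x y.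
  by move=> x y ? ?; apply: Hi; rewrite inE.
set hv := [ffun h => f (inr (v,h))].
have hvE h : hv h = f (inr (v,h)) by rewrite ffunE.
have -> : \sum_h f (inr (v,h)) = weight4 hv by apply: eq_bigr => h _; rewrite ffunE.
have Hind : independent eH [set h | hv h == 0 :> nat].
  apply/indepP => h k; rewrite !inE !hvE => h0 k0.
  by move: (Hi' _ _ h0 k0) => /=; rewrite eqxx.
case E: (nat_of_ord (f (inl v))) => [|[|[|k]]] /=.
- set D := [set h | 2 <= hv h].
  have nz h : hv h != 0 :> nat.
    apply/negP => h0; move: (Hi' (inl v) (inr (v,h))); rewrite -hvE h0 E /= eqxx.
    by move=> /(_ isT isT); rewrite eqxx.
  have Dd : dominating eH D.
    apply/domP => h; case: (leqP 2 (hv h)) => [h2|lt2]; first by left; rewrite inE.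
    have h1 : hv h == 1 :> nat by move: (nz h) lt2; case: (nat_of_ord (hv h)) => [|[|]].
    rewrite hvE in h1; case: (Hd (inr (v,h))) => _ /(_ h1) [[w|[w k]] /=].
      by move/eqP => ->; rewrite E.
    by case/andP => /eqP <- ehk f2; right; exists k; rewrite // inE hvE.
  apply: leq_trans (_ : #|TH| + #|D| <= _).
    by rewrite leq_add2l; apply: bigmin_le.
  rewrite -sum1 -(muln1 #|D|) -sum_ind -big_split /=.
  apply: leq_sum => h _; move: (nz h); case: (nat_of_ord (hv h)) => [|[|]] //.
- apply: bigmin_le; apply/andP; split => //.
  apply/DRDP => h; rewrite !hvE; split.
    move=> h0; case: (Hd (inr (v,h))) => /(_ h0) [[[w|[w k]] /=]|].
    + by move/eqP => ->; rewrite E.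
    + by case/andP => /eqP <- ehk f3; left; exists k; rewrite // hvE.
    + move=> H2; right; apply: leq_trans H2 _.
      set B := [set k | eH h k && (hv k == 2 :> nat)].
      apply: leq_trans (leq_imset_card (fun k => inr (v,k) : corona_vert TG TH) B).
      apply: subset_leq_card; apply/subsetP => -[w|[w k]]; rewrite inE /=.
        by case/andP => /eqP ->; rewrite E.
      case/andP => /andP [/eqP <- ehk] f2; apply/imsetP; exists k => //.
      by rewrite inE ehk hvE.
  move=> h1; case: (Hd (inr (v,h))) => _ /(_ h1) [[w|[w k]] /=].
    by move/eqP => ->; rewrite E.
  by case/andP => /eqP <- ehk f2; exists k; rewrite // hvE.
- set r : {ffun TH -> 'I_3} := [ffun h => inord (minn (hv h) 2)].
  have rE h : (r h : nat) = minn (hv h) 2 by rewrite ffunE inordK // ltnS geq_minr.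
  have r0 h : (r h == 0 :> nat) = (hv h == 0 :> nat).
    by rewrite rE; case: (nat_of_ord (hv h)) => [|[|]].
  apply: leq_trans (_ : weight3 r <= _).
    apply: bigmin_le; apply/andP; split.
      apply/RDP => h; rewrite r0 hvE => h0.
      case: (Hd (inr (v,h))) => /(_ h0) [[[w|[w k]] /=]|].
      + by move/eqP => ->; rewrite E.
      + by case/andP => /eqP <- ehk f3; exists k; rewrite // rE hvE (eqP f3).
      + set A := [set u | _]; move=> H2.
        have : 0 < #|A :\ inl v|.
          by move: H2; rewrite (cardsD1 (inl v) A); case: (_ \in _); rewrite ?add1n ?add0n ?ltnS // => /ltnW.
        rewrite card_gt0 => /set0Pn [[w|[w k]]]; rewrite !inE /=.
          by case/and3P => /negP nw /eqP wv; rewrite wv eqxx in nw.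
        case/andP => /andP [/eqP <- ehk] f2 _; exists k => //.
        by rewrite rE hvE (eqP f2).
    apply/indepP => h k; rewrite !inE !r0 => h0 k0.
    by move/indepP: Hind; apply; rewrite inE.
  by apply: leq_sum => h _; rewrite rE geq_minl.
- set D := [set h | hv h != 0 :> nat].
  apply: leq_trans (_ : #|D| <= _).
    apply: bigmin_le; apply/vcP => a b eab; rewrite !inE.
    case: (boolP (hv a == 0 :> nat)) => a0; last by left.
    case: (boolP (hv b == 0 :> nat)) => b0; last by right.
    by move/indepP: Hind => /(_ a b); rewrite !inE a0 b0 eab => /(_ isT isT).
  rewrite -(muln1 #|D|) -sum_ind; apply: leq_sum => h _.
  by case: (nat_of_ord (hv h)).
Qed.

End Main.

Section Upper.
Variables (TG TH : finType) (eG : rel TG) (eH : rel TH).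
Local Notation C := (corona eG eH).
Variables (D : {set TH}) (hO : {ffun TH -> 'I_4}) (r : {ffun TH -> 'I_3}) (Cv : {set TH}).

Definition sel (k : nat) : {ffun TH -> 'I_4} :=
  match k with
  | 0 => [ffun h => inord (if h \in D then 2 else 1)]
  | 1 => hO
  | 2 => [ffun h => widen_ord (isT : 3 <= 4) (r h)]
  | _ => [ffun h => inord (h \in Cv : nat)]
  end.

Lemma sel0 h : (sel 0 h : nat) = if h \in D then 2 else 1.
Proof. by rewrite /= ffunE inordK //; case: (h \in D). Qed.
Lemma sel2 h : (sel 2 h : nat) = r h.
Proof. by rewrite /= ffunE. Qed.
Lemma sel3 k h : (sel k.+3 h : nat) = (h \in Cv).
Proof. by rewrite /= ffunE inordK //; case: (h \in Cv). Qed.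

Lemma wsel k : \sum_h (sel k h : nat) =
  match k with 0 => #|TH| + #|D| | 1 => weight4 hO | 2 => weight3 r | _ => #|Cv| end.
Proof.
case: k => [|[|[|k]]].
- rewrite -sum1 -sum_mem -big_split /=; apply: eq_bigr => h _.
  by rewrite sel0; case: (h \in D).
- by [].
- by apply: eq_bigr => h _; rewrite sel2.
- by rewrite -sum_mem; apply: eq_bigr => h _; rewrite sel3.
Qed.

Definition fC (fG : {ffun TG -> 'I_4}) : {ffun corona_vert TG TH -> 'I_4} :=
  [ffun x => match x with inl v => fG v | inr (v, h) => sel (fG v) h end].


Lemma inr_inj (v : TG) : injective (fun h : TH => (inr (v, h) : corona_vert TG TH)).
Proof. by move=> a b []. Qed.

Lemma fC_OIDRD (fG : {ffun TG -> 'I_4}) :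
  dominating eH D -> 2 <= #|D| -> isOIDRD eH hO -> (exists h, 2 <= hO h) ->
  isOIRD eH r -> vertex_cover eH Cv -> independent eG [set v | fG v == 0 :> nat] ->
  isOIDRD C (fC fG).
Proof.
move=> HD HD2 HO HO2 HR HC HG.
have fE1 v : fC fG (inl v) = fG v by rewrite ffunE.
have fE2 v h : fC fG (inr (v,h)) = sel (fG v) h by rewrite ffunE.
apply/andP; split.
  apply/DRDP => -[v|[v h]]; rewrite ?fE1 ?fE2.
    case E: (nat_of_ord (fG v)) => [|[|k]]; split => // _.
      right; apply: leq_trans HD2 _.
      rewrite -(card_imset D (@inr_inj v)); apply: subset_leq_card.
      apply/subsetP => u /imsetP [h hD ->]; rewrite inE /= eqxx fE2 E sel0 hD.
      by [].
    case: HO2 => h2 Hh2; exists (inr (v,h2)); rewrite /= ?eqxx //.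
    by rewrite fE2 E.
  case E: (nat_of_ord (fG v)) => [|[|[|k]]].
  - rewrite !sel0; split; first by case: (h \in D).
    case hD: (h \in D) => // _.
    move/domP: HD => /(_ h) [hin|[w ehw wD]]; first by rewrite hin in hD.
    by exists (inr (v,w)); rewrite /= ?eqxx ?ehw // fE2 E sel0 wD.
  - move/DRDP: (andP HO).1 => HOd; case: (HOd h) => H0 H1; split.
      move=> /H0 [[w ehw w3]|H2].
        by left; exists (inr (v,w)); rewrite /= ?eqxx ?ehw // fE2 E.
      right; apply: leq_trans H2 _.
      rewrite -(card_imset _ (@inr_inj v)); apply: subset_leq_card.
      apply/subsetP => u /imsetP [w]; rewrite inE => /andP [ehw w2] ->.
      by rewrite inE /= eqxx ehw fE2 E.
    move=> /H1 [w ehw w2]; exists (inr (v,w)); rewrite /= ?eqxx ?ehw //.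
    by rewrite fE2 E.
  - rewrite sel2; move/RDP: (andP HR).1 => HRd; split.
      move=> /HRd [w ehw w2]; right.
      apply: leq_trans (_ : #|[set inl v; inr (v,w)]| <= _); first by rewrite cards2.
      apply: subset_leq_card; apply/subsetP => u; rewrite !inE => /orP [] /eqP ->.
        by rewrite /= eqxx fE1 E.
      by rewrite /= eqxx ehw fE2 E sel2.
    by move=> _; exists (inl v); rewrite /= ?eqxx // fE1 E.
  - rewrite sel3.
    have k0 : k = 0 by move: (ltn_ord (fG v)); rewrite E; case: k {E}.
    split.
      by move=> _; left; exists (inl v); rewrite /= ?eqxx // fE1 E k0.
    by move=> _; exists (inl v); rewrite /= ?eqxx // fE1 E.
apply/indepP => x y; rewrite !inE.
case: x => [u|[u h]]; case: y => [w|[w k]]; rewrite ?fE1 ?fE2 /=.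
- move=> u0 w0; move/indepP: HG => /(_ u w); rewrite !inE u0 w0; apply => //.
- move=> u0 k0; apply/negP => /eqP uw; subst u.
  by move: k0; rewrite (eqP u0) sel0; case: (_ \in D).
- move=> h0 w0; apply/negP => /eqP wu; subst w.
  by move: h0; rewrite (eqP w0) sel0; case: (_ \in D).
- move=> h0 k0; apply/negP => /andP [/eqP uw ehk]; subst u.
  move: h0 k0; case E: (nat_of_ord (fG w)) => [|[|[|n]]].
  + by rewrite sel0; case: (_ \in D).
  + move=> h0 k0; move/indepP: (andP HO).2 => /(_ h k); rewrite !inE h0 k0 ehk.
    by move=> /(_ isT isT).
  + rewrite !sel2 => h0 k0; move/indepP: (andP HR).2 => /(_ h k); rewrite !inE h0 k0 ehk.
    by move=> /(_ isT isT).
  + by rewrite !sel3; move/vcP: HC => /(_ h k ehk) [] ->.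
Qed.

End Upper.

Section Misc.
Variables (T : finType) (e : rel T).

Lemma gamma_ge2 (D : {set T}) : symmetric e -> max_degree e + 2 <= #|T| ->
  dominating e D -> 2 <= #|D|.
Proof.
move=> sym Hdeg /domP HD; case: (leqP 2 #|D|) => // lt2.
have T0 : 0 < #|T| by lia.
case/card_gt0P: T0 => h0 _.
move: lt2; rewrite ltnS leq_eqVlt ltnS leqn0 => /orP [/cards1P [u Du]|/eqP/cards0_eq D0].
  have : #|[set~ u]| <= #|nbhd e u|.
    apply: subset_leq_card; apply/subsetP => h; rewrite !inE => hu.
    case: (HD h) => [|[w ehw]]; first by rewrite Du inE (negbTE hu).
    by rewrite Du inE => /eqP wu; rewrite sym -wu.
  rewrite cardsC1 => H.
  have H2 : #|nbhd e u| <= max_degree e by apply: (@leq_bigmax _ (fun v => #|nbhd e v|) u).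
  lia.
by case: (HD h0) => [|[w _]]; rewrite D0 inE.
Qed.

Lemma drd_has2 (f : {ffun T -> 'I_4}) (h0 : T) : isDRD e f -> exists h, 2 <= f h.
Proof.
move/DRDP => /(_ h0) [H0 H1].
case E: (nat_of_ord (f h0)) => [|[|k]]; last by exists h0; rewrite E.
  move: H0; rewrite E => /(_ isT) [[u _ /eqP u3]|H2]; first by exists u; rewrite u3.
  have : 0 < #|[set u | e h0 u && (f u == 2 :> nat)]| by apply: leq_trans H2.
  by case/card_gt0P => u; rewrite inE => /andP [_ /eqP u2]; exists u; rewrite u2.
by move: H1; rewrite E => /(_ isT) [u _ ?]; exists u.
Qed.

Lemma const3_ok : isOIDRD e [ffun _ : T => (inord 3 : 'I_4)] /\
  weight4 [ffun _ : T => (inord 3 : 'I_4)] = 3 * #|T|.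
Proof.
split.
  apply/andP; split.
    by apply/DRDP => v; rewrite ffunE inordK.
  by apply/indepP => u v; rewrite inE ffunE inordK.
rewrite /weight4 mulnC -sum1_card /= big_distrl /=; apply: eq_big => // v.
by rewrite ffunE inordK // mul1n.
Qed.

Lemma const2_ok : isOIRD e [ffun _ : T => (inord 2 : 'I_3)] /\
  weight3 [ffun _ : T => (inord 2 : 'I_3)] = 2 * #|T|.
Proof.
split.
  apply/andP; split.
    by apply/RDP => v; rewrite ffunE inordK.
  by apply/indepP => u v; rewrite inE ffunE inordK.
rewrite /weight3 mulnC -sum1_card /= big_distrl /=; apply: eq_big => // v.
by rewrite ffunE inordK // mul1n.
Qed.

End Misc.

Theorem theorem6 (TG TH : finType) (eG : rel TG) (eH : rel TH) :
  simple_graph eG -> simple_graph eH ->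
  max_degree eH + 2 <= #|TH| ->
  (exists fG : {ffun TG -> 'I_4},
      independent eG [set v | fG v == 0 :> nat] /\
      gamma_oidR (corona eG eH) = corona_cost eH fG) /\
  (forall fG : {ffun TG -> 'I_4},
      independent eG [set v | fG v == 0 :> nat] ->
      gamma_oidR (corona eG eH) <= corona_cost eH fG).
Proof.
move=> _ [symH _] Hdeg.
have T0 : 0 < #|TH| by lia.
case/card_gt0P: T0 => h0 _.
have [D HD eD] : exists2 D, dominating eH D & gamma eH = #|D|.
  apply: (bigmin_attained (x0 := setT)); last by rewrite cardsT.
  by apply/domP => v; left; rewrite inE.
have [hO HO eO] : exists2 hO, isOIDRD eH hO & gamma_oidR eH = weight4 hO.
  by case: (const3_ok eH) => ? ?; apply: bigmin_attained; eauto; lia.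
have [r HR eR] : exists2 r, isOIRD eH r & gamma_oiR eH = weight3 r.
  by case: (const2_ok eH) => ? ?; apply: bigmin_attained; eauto; lia.
have [Cv HC eC] : exists2 Cv, vertex_cover eH Cv & beta eH = #|Cv|.
  apply: (bigmin_attained (x0 := setT)); last by rewrite cardsT.
  by apply/vcP => u v _; left; rewrite inE.
have HD2 := gamma_ge2 symH Hdeg HD.
have HO2 := drd_has2 h0 (andP HO).1.
have up : forall fG : {ffun TG -> 'I_4},
    independent eG [set v | fG v == 0 :> nat] ->
    gamma_oidR (corona eG eH) <= corona_cost eH fG.
  move=> fG HG.
  apply: leq_trans (bigmin_le _ _ (fC_OIDRD HD HD2 HO HO2 HR HC HG)) _.
  rewrite weight_corona cost_eq; apply: eq_leq; apply: eq_bigr => v _.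
  rewrite ffunE; congr (_ + _).
  rewrite (eq_bigr (fun h => nat_of_ord (sel D hO r Cv (fG v) h))); last first.
    by move=> h _; rewrite ffunE.
  rewrite wsel; case: (nat_of_ord (fG v)) => [|[|[|k]]] /=.
  - by rewrite eD.
  - by rewrite eO.
  - by rewrite eR.
  - by rewrite eC.
split => //.
have [f0 Hf0 ef0] : exists2 f0, isOIDRD (corona eG eH) f0 &
    gamma_oidR (corona eG eH) = weight4 f0.
  by case: (const3_ok (corona eG eH)) => ? ?; apply: bigmin_attained; eauto; lia.
have HG : independent eG [set v | [ffun v => f0 (inl v)] v == 0 :> nat].
  apply/indepP => u w; rewrite !inE !ffunE => u0 w0.
  by have := (indepP _ _ (andP Hf0).2) (inl u) (inl w); rewrite !inE u0 w0 /=; apply.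
exists [ffun v => f0 (inl v)]; split => //.
apply/eqP; rewrite eqn_leq up //= ef0 weight_corona cost_eq.
apply: leq_sum => v _; rewrite ffunE leq_add2l. exact: (@lower TG TH eG eH f0 v Hf0).
Qed.
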